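(* Let $f$ be a transcendental entire function and let $P$ be a bounded periodic component of the Fatou set $F(f)$. Then $\partial P \cap BU(f) = \emptyset$.
   Context: For an entire function $f$, $f^n$ denotes the $n$-th iterate. The Fatou set $F(f)$ is the set of points having a neighbourhood on which the family $\{f^n\}$ is normal; a component $P$ of $F(f)$ is periodic if $f^p(P)\subset P$ for some $p\ge 1$. The escaping set is $I(f)=\{z\in\mathbb{C}: f^n(z)\to\infty \text{ as } n\to\infty\}$, the set of points with bounded orbit is $K(f)=\{z\in\mathbb{C}: \text{there is } R>0 \text{ with } |f^n(z)|\le R \text{ for all } n\ge 0\}$, and the Bungee set is $BU(f)=\mathbb{C}\setminus (I(f)\cup K(f))$, i.e. the set of $z$ whose orbit is unbounded but does not tend to $\infty$ (equivalently, there are sequences $n_k\to\infty$, $m_k\to\infty$ and $R>0$ with $|f^{n_k}(z)|\le R$ for all $k$ and $f^{m_k}(z)\to\infty$). *)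

(* Defs.v *)
From Stdlib Require Import Reals List.
From Coquelicot Require Import Coquelicot.
Open Scope R_scope.

Definition iter (f : C -> C) (n : nat) (z : C) : C := Nat.iter n f z.

Definition entire (f : C -> C) : Prop :=
  forall z : C, ex_derive (K := C_AbsRing) (V := C_NormedModule) f z.

(* polynomial evaluation (Horner form), coefficients listed from degree 0 *)
Definition peval (l : list C) (z : C) : C :=
  fold_right (fun a acc => Cplus a (Cmult z acc)) (RtoC 0) l.

Definition is_polynomial (f : C -> C) : Prop :=
  exists l : list C, forall z, f z = peval l z.

Definition transcendental_entire (f : C -> C) : Prop :=
  entire f /\ ~ is_polynomial f.

Definition disc (a : C) (r : R) : C -> Prop := fun z => Cmod (Cminus z a) < r.
Definition cdisc (a : C) (r : R) : C -> Prop := fun z => Cmod (Cminus z a) <= r.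

Definition is_open (U : C -> Prop) : Prop :=
  forall z, U z -> exists r, 0 < r /\ forall w, disc z r w -> U w.

Definition loc_unif_cvg (U : C -> Prop) (g : nat -> C -> C) (h : C -> C) : Prop :=
  forall z, U z -> exists r, 0 < r /\ (forall w, cdisc z r w -> U w) /\
    forall eps, 0 < eps -> exists N, forall k w, (N <= k)%nat -> cdisc z r w ->
      Cmod (Cminus (g k w) (h w)) < eps.

Definition loc_unif_infty (U : C -> Prop) (g : nat -> C -> C) : Prop :=
  forall z, U z -> exists r, 0 < r /\ (forall w, cdisc z r w -> U w) /\
    forall M, exists N, forall k w, (N <= k)%nat -> cdisc z r w -> M < Cmod (g k w).

(* the family {f^n} is normal on U (Montel's sense, limit infinity allowed):
   every sequence f^(n_k) has a subsequence converging locally uniformly on U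
   either to a (finite-valued) function or to infinity *)
Definition normal_iterates (f : C -> C) (U : C -> Prop) : Prop :=
  forall nk : nat -> nat, exists phi : nat -> nat,
    (forall k, (phi k < phi (S k))%nat) /\
    ((exists h : C -> C, loc_unif_cvg U (fun k => iter f (nk (phi k))) h) \/
     loc_unif_infty U (fun k => iter f (nk (phi k)))).

Definition Fatou (f : C -> C) (z : C) : Prop :=
  exists U, is_open U /\ U z /\ normal_iterates f U.

Definition connected_set (S : C -> Prop) : Prop :=
  ~ exists A B : C -> Prop, is_open A /\ is_open B /\
      (forall z, S z -> A z \/ B z) /\
      (forall z, S z -> A z -> B z -> False) /\
      (exists z, S z /\ A z) /\ (exists z, S z /\ B z).

Definition component_of (X P : C -> Prop) : Prop :=
  exists z0, X z0 /\
    forall w, P w <-> exists S, connected_set S /\ (forall u, S u -> X u) /\ S z0 /\ S w.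

Definition periodic_Fatou_component (f : C -> C) (P : C -> Prop) : Prop :=
  component_of (Fatou f) P /\
  exists p : nat, (1 <= p)%nat /\ forall z, P z -> P (iter f p z).

Definition bounded_set (P : C -> Prop) : Prop :=
  exists M, forall z, P z -> Cmod z <= M.

Definition cl_set (S : C -> Prop) (z : C) : Prop :=
  forall r, 0 < r -> exists w, S w /\ disc z r w.

Definition boundary (S : C -> Prop) (z : C) : Prop :=
  cl_set S z /\ cl_set (fun w => ~ S w) z.

Definition escaping (f : C -> C) (z : C) : Prop :=
  forall M, exists N, forall n, (N <= n)%nat -> M < Cmod (iter f n z).

Definition bounded_orbit (f : C -> C) (z : C) : Prop :=
  exists R, 0 < R /\ forall n, Cmod (iter f n z) <= R.

Definition Bungee (f : C -> C) (z : C) : Prop :=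
  ~ escaping f z /\ ~ bounded_orbit f z.

(* Main.v *)
Require Import Defs.
From Stdlib Require Import Reals Lra Lia.
From Coquelicot Require Import Coquelicot.
Open Scope R_scope.

Lemma f_cont (f : C -> C) : entire f -> forall x eps, 0 < eps ->
  exists d, 0 < d /\ forall w, Cmod (Cminus w x) < d -> Cmod (Cminus (f w) (f x)) < eps.
Proof.
  intros Hf x eps He.
  pose proof (ex_derive_continuous _ _ (Hf x)) as Hc.
  unfold continuous in Hc.
  assert (H2: 0 < eps / sqrt 2).
  { apply Rdiv_lt_0_compat; [lra|apply sqrt_lt_R0; lra]. }
  destruct (proj1 (filterlim_locally _ _) Hc (mkposreal _ H2)) as [d Hd].
  exists d. split; [apply cond_pos|]. intros w Hw.
  specialize (Hd w Hw). simpl in Hd.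
  pose proof (@norm_compat2 C_AbsRing C_NormedModule _ _ (mkposreal _ H2) Hd) as H. simpl in H. change (Cmod (Cminus (f w) (f x)) < sqrt 2 * (eps / sqrt 2)) in H.
  replace (sqrt 2 * (eps / sqrt 2)) with eps in H. exact H.
  field. apply Rgt_not_eq, sqrt_lt_R0; lra.
Qed.

Lemma iter_S (f : C -> C) n z : iter f (S n) z = f (iter f n z).
Proof. reflexivity. Qed.

Lemma iter_add (f : C -> C) a b z : iter f (a + b) z = iter f a (iter f b z).
Proof. induction a; simpl; [reflexivity|]. unfold iter in *; simpl. now rewrite IHa. Qed.

Lemma iter_cont (f : C -> C) : entire f -> forall n x eps, 0 < eps ->
  exists d, 0 < d /\ forall w, Cmod (Cminus w x) < d ->
    Cmod (Cminus (iter f n w) (iter f n x)) < eps.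
Proof.
  intros Hf n. induction n; intros x eps He.
  - exists eps. split; auto.
  - destruct (f_cont f Hf (iter f n x) eps He) as [d1 [Hd1 H1]].
    destruct (IHn x d1 Hd1) as [d2 [Hd2 H2]].
    exists d2. split; auto. intros w Hw. rewrite !iter_S. apply H1, H2, Hw.
Qed.

Lemma Cmod_sym (a b : C) : Cmod (Cminus a b) = Cmod (Cminus b a).
Proof.
  rewrite <- Cmod_opp. f_equal. unfold Cminus. ring.
Qed.

Lemma cl_bound (P : C -> Prop) M : (forall z, P z -> Cmod z <= M) ->
  forall w, cl_set P w -> Cmod w <= M.
Proof.
  intros HM w Hw. destruct (Rle_or_lt (Cmod w) M) as [h|h]; auto.
  destruct (Hw (Cmod w - M)) as [u [Pu Du]]; [lra|].
  unfold Defs.disc in Du. specialize (HM u Pu).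
  pose proof (Cmod_triangle u (Cminus w u)) as T.
  replace (Cplus u (Cminus w u)) with w in T by (unfold Cminus; ring).
  rewrite (Cmod_sym u w) in Du. lra.
Qed.

Lemma cl_inv (f : C -> C) (P : C -> Prop) p : entire f ->
  (forall z, P z -> P (iter f p z)) ->
  forall w, cl_set P w -> cl_set P (iter f p w).
Proof.
  intros Hf HP w Hw r Hr.
  destruct (iter_cont f Hf p w r Hr) as [d [Hd H]].
  destruct (Hw d Hd) as [u [Pu Du]].
  exists (iter f p u). split; auto. unfold Defs.disc. apply H. exact Du.
Qed.

Lemma cl_inv_mul (f : C -> C) (P : C -> Prop) p : entire f ->
  (forall z, P z -> P (iter f p z)) ->
  forall q w, cl_set P w -> cl_set P (iter f (q * p) w).
Proof.
  intros Hf HP q. induction q; intros w Hw; simpl; auto.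
  rewrite iter_add. apply cl_inv; auto.
Qed.

From Stdlib Require Import Classical ClassicalEpsilon List.

Definition pt (t : Compactness.Tn 2 R) : C := (fst t, fst (snd t)).

Lemma list_bound (g : C -> C) (l : list (Compactness.Tn 2 R)) :
  exists B, forall t, In t l -> Cmod (g (pt t)) <= B.
Proof.
  induction l as [|a l [B HB]].
  - exists 0. intros t [].
  - exists (Rmax (Cmod (g (pt a))) B). intros t [<-|Ht].
    + apply Rmax_l.
    + eapply Rle_trans; [apply HB, Ht|apply Rmax_r].
Qed.

Lemma ball_bound (g : C -> C) M :
  (forall x, exists d, 0 < d /\ forall w, Cmod (Cminus w x) < d -> Cmod (Cminus (g w) (g x)) < 1) ->
  exists B, forall w, Cmod w <= M -> Cmod (g w) <= B.
Proof.
  intros Hg.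
  assert (H : forall t : Compactness.Tn 2 R, exists d : posreal,
    forall w, Cmod (Cminus w (pt t)) < 2 * d -> Cmod (Cminus (g w) (g (pt t))) < 1).
  { intros t. destruct (Hg (pt t)) as [d [Hd H]].
    assert (Hd2 : 0 < d / 2) by lra. exists (mkposreal _ Hd2). simpl.
    intros w Hw. apply H. lra. }
  set (delta := fun t => proj1_sig (constructive_indefinite_description _ (H t))).
  assert (Hdelta : forall t w, Cmod (Cminus w (pt t)) < 2 * delta t ->
     Cmod (Cminus (g w) (g (pt t))) < 1).
  { intros t. unfold delta. destruct (constructive_indefinite_description _ (H t)). simpl. auto. }
  pose proof (compactness_list 2 ((-M)%R, ((-M)%R, tt)) (M, (M, tt)) delta) as HL.
  apply NNPP. intro Hn. apply HL. intros [l Hl]. apply Hn.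
  destruct (list_bound g l) as [B HB].
  exists (B + 1). intros w Hw.
  destruct w as [w1 w2].
  pose proof (Rmax_Cmod (w1, w2)) as Hm. simpl in Hm.
  destruct (Hl (w1, (w2, tt))) as [t [Ht [_ Hc]]].
  { simpl. pose proof (Rmax_l (Rabs w1) (Rabs w2)). pose proof (Rmax_r (Rabs w1) (Rabs w2)).
    pose proof (Rabs_le_between' w1 0 M). pose proof (Rabs_le_between' w2 0 M).
    unfold Rabs in *. repeat split; destruct (Rcase_abs w1); destruct (Rcase_abs w2); lra. }
  destruct t as [t1 [t2 []]]. simpl in Hc. destruct Hc as [h1 [h2 _]].
  assert (Hcl : Cmod (Cminus (w1, w2) (pt (t1, (t2, tt)))) < 2 * delta (t1, (t2, tt))).
  { eapply Rle_lt_trans; [apply Cmod_2Rmax|]. simpl.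
    assert (Hs : sqrt 2 < 2).
    { rewrite <- (sqrt_square 2) at 2 by lra. apply sqrt_lt_1; lra. }
    assert (Hr : Rmax (Rabs (w1 + - t1)) (Rabs (w2 + - t2)) < delta (t1, (t2, tt))).
    { apply Rmax_lub_lt; auto. }
    pose proof (Rmax_l (Rabs (w1 + - t1)) (Rabs (w2 + - t2))).
    pose proof (Rabs_pos (w1 + - t1)).
    pose proof (cond_pos (delta (t1, (t2, tt)))).
    nra. }
  specialize (Hdelta _ _ Hcl).
  specialize (HB _ Ht).
  pose proof (Cmod_triangle (g (pt (t1, (t2, tt)))) (Cminus (g (w1, w2)) (g (pt (t1, (t2, tt)))))) as T.
  replace (Cplus (g (pt (t1, (t2, tt)))) (Cminus (g (w1, w2)) (g (pt (t1, (t2, tt)))))) with (g (w1, w2)) in T by (unfold Cminus; ring).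
  eapply Rle_trans; [exact T|]. apply Rplus_le_compat; [exact HB|apply Rlt_le; exact Hdelta].
Qed.

Lemma iters_bound (f : C -> C) M : entire f -> forall p,
  exists B, forall j w, (j < p)%nat -> Cmod w <= M -> Cmod (iter f j w) <= B.
Proof.
  intros Hf p. induction p as [|p [B HB]].
  - exists 0. intros j w Hj. lia.
  - destruct (ball_bound (iter f p) M) as [B' HB'].
    { intros x. destruct (iter_cont f Hf p x 1 Rlt_0_1) as [d [Hd H]]. eauto. }
    exists (Rmax B B'). intros j w Hj Hw.
    destruct (Nat.eq_dec j p) as [->|Hne].
    + eapply Rle_trans; [apply HB', Hw|apply Rmax_r].
    + eapply Rle_trans; [apply HB; [lia|exact Hw]|apply Rmax_l].
Qed.

Theorem theorem1 (f : C -> C) (P : C -> Prop) :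
  transcendental_entire f ->
  periodic_Fatou_component f P ->
  bounded_set P ->
  forall z, boundary P z -> ~ Bungee f z.
Proof.
  intros [Hf _] [_ [p [Hp HP]]] [M HM] z [Hz _] [_ Hb].
  apply Hb.
  destruct (iters_bound f M Hf p) as [B HB].
  exists (Rmax 1 B). split; [apply Rlt_le_trans with 1; [lra|apply Rmax_l]|].
  intros n.
  rewrite (Nat.div_mod n p) by lia.
  rewrite Nat.add_comm, iter_add, Nat.mul_comm.
  eapply Rle_trans; [|apply Rmax_r].
  apply HB.
  - apply Nat.mod_upper_bound. lia.
  - apply (cl_bound P M HM). apply cl_inv_mul; auto.
Qed.
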